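(* Let $p\ge3$ be an integer, $\mu\in[0,1)$, $\xi_\mu(t)=\mu t^2+(1-\mu)t^p$, and suppose $y_\mu$ satisfies $\frac{\xi_\mu''(1)}{\xi_\mu'(1)}\le y_\mu\le\frac{\xi_\mu'(1)}{\xi_\mu''(0)}$. Then the equation $h_\mu(t)=0$ has at most two solutions $t\in(0,1)$.
   Context: $y_\mu$ is the unique $y\in(1,\infty)$ with $\frac{\xi_\mu(1)}{\xi_\mu'(1)}=\frac1{y-1}\big(\frac y{y-1}\log y-1\big)$; if $\xi_\mu''(0)=0$ the upper bound is $+\infty$. Let $m_\mu,c_\mu>0$ be the unique solution of $\xi_\mu(1)=\frac1m\big(\frac1m\log\frac{c+m}c-\frac1{c+m}\big)$, $\frac1{\xi_\mu'(1)}=c(c+m)$, let $\phi_\mu(t)=c_\mu+m_\mu(1-t)$, and $h_\mu=\phi_\mu^{-2}-\xi_\mu''$. *)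

(* Defs.v *)
From Stdlib Require Import Reals Lra.
Open Scope R_scope.

Definition xi (mu : R) (p : nat) (t : R) : R := mu * t ^ 2 + (1 - mu) * t ^ p.
Definition xi1 (mu : R) (p : nat) (t : R) : R :=
  2 * mu * t + INR p * (1 - mu) * t ^ (p - 1).
Definition xi2 (mu : R) (p : nat) (t : R) : R :=
  2 * mu + INR p * INR (p - 1) * (1 - mu) * t ^ (p - 2).

Definition phi (c m t : R) : R := c + m * (1 - t).
Definition h (mu : R) (p : nat) (c m t : R) : R := / (phi c m t) ^ 2 - xi2 mu p t.

(* Main.v *)
Require Import Defs.
From Stdlib Require Import Reals Lra Lia.
From Coquelicot Require Import Coquelicot.
Open Scope R_scope.

Lemma ln_lower y : 1 < y -> 2*(y-1)/(y+1) < ln y.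
Proof.
intros Hy.
destruct (MVT_cor2 (fun x => ln x - 2*(x-1)/(x+1)) (fun x => /x - 4/(x+1)^2) 1 y Hy)
  as [z [Hz Hzi]].
{ intros x Hx. apply is_derive_Reals. auto_derive. lra. field. lra. }
rewrite ln_1 in Hz.
assert (0 < /z - 4/(z+1)^2).
{ replace (/z - 4/(z+1)^2) with ((z-1)^2/(z*(z+1)^2)) by (field; lra).
  apply Rdiv_lt_0_compat. nra. apply Rmult_lt_0_compat; nra. }
assert (0 < (/z - 4/(z+1)^2) * (y-1)) by nra.
assert (2*(1-1)/(1+1) = 0) by field. lra.
Qed.

Definition G (y : R) := / (y - 1) * (y / (y - 1) * ln y - 1).

Lemma G_dec u v : 1 < u -> u < v -> G v < G u.
Proof.
intros Hu Huv.
destruct (MVT_cor2 G (fun y => (2*(y-1) - (y+1)*ln y)/(y-1)^3) u v Huv)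
  as [z [Hz Hzi]].
{ intros x Hx. apply is_derive_Reals. unfold G. auto_derive. repeat split; lra. field. lra. }
assert ((2*(z-1) - (z+1)*ln z)/(z-1)^3 < 0).
{ pose proof (ln_lower z ltac:(lra)) as Hl.
  apply Rdiv_neg_pos.
  assert (2*(z-1) = 2*(z-1)/(z+1) * (z+1)) by (field; lra). nra.
  apply pow_lt; lra. }
nra.
Qed.

Lemma alg (Q a x0 x1 x2 : R) : 1 <= Q -> 0 <= a -> 0 < x2 -> x2 < x1 -> x1 < x0 ->
  a * x0^2 <= 1 ->
  2*(x0 - x1) - Q*x1 + Q*a*x1^3 = 0 ->
  2*(x0 - x2) - Q*x2 + Q*a*x2^3 = 0 -> False.
Proof.
intros HQ Ha H2 H21 H10 Hx0 F1 F2.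
assert (E : (x1 - x2) * (Q*a*(x1^2+x1*x2+x2^2) - (Q+2)) = 0) by (rewrite <- (Rminus_diag_eq _ _ (eq_trans F1 (eq_sym F2))); ring).
apply Rmult_integral in E. destruct E as [E|E]; [lra|].
assert (S12 : 0 < x1^2+x1*x2+x2^2) by nra.
assert (Qa : 0 < Q*a).
{ destruct (Rle_lt_dec (Q*a) 0) as [h|h]; [|exact h].
  assert (Q*a*(x1^2+x1*x2+x2^2) <= 0) by nra. lra. }
assert (Sl : x1^2+x1*x2+x2^2 < x0^2+x0*x1+x1^2) by nra.
assert (P : 0 < (x0 - x1) * (Q*a*(x0^2+x0*x1+x1^2) - (Q+2))).
{ apply Rmult_lt_0_compat. lra.
  assert (Q*a*(x1^2+x1*x2+x2^2) < Q*a*(x0^2+x0*x1+x1^2)) by (apply Rmult_lt_compat_l; lra). lra. }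
assert (F0 : -Q*x0 + Q*a*x0^3 <= 0).
{ assert (-Q*x0 + Q*a*x0^3 = Q*x0*(a*x0^2 - 1)) by ring.
  assert (0 <= Q*x0) by nra. nra. }
assert ((x0 - x1) * (Q*a*(x0^2+x0*x1+x1^2) - (Q+2)) = (-Q*x0 + Q*a*x0^3) - (2*(x0 - x1) - Q*x1 + Q*a*x1^3)) by ring.
lra.
Qed.

Definition psi (mu c m : R) (r : nat) (t : R) := (/ (phi c m t)^2 - 2*mu) / t^(S r).
Definition dpsi (mu c m : R) (r : nat) (t : R) :=
  (2*m*t/(phi c m t)^3 - INR (S r) * (/ (phi c m t)^2 - 2*mu)) / (t * t^(S r)).

Lemma psi_der mu c m r t : 0 < phi c m t -> 0 < t -> derivable_pt_lim (psi mu c m r) t (dpsi mu c m r t).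
Proof.
intros Hp Ht. apply is_derive_Reals. unfold psi, dpsi, phi in *.
assert (t^r > 0) by (apply pow_lt; lra).
auto_derive.
- repeat split; apply Rgt_not_eq; nra.
- change (match r with 0%nat => 1 | S _ => INR r + 1 end) with (INR (S r)).
  simpl. field. repeat split; nra.
Qed.

Lemma dpsi0 mu c m r t : 0 < phi c m t -> 0 < t -> dpsi mu c m r t = 0 ->
  2*m*t = INR (S r) * (phi c m t - 2*mu * (phi c m t)^3).
Proof.
intros Hp Ht E. unfold dpsi in E.
assert (t * t^(S r) > 0) by (apply Rmult_lt_0_compat; [lra| apply pow_lt; lra]).
assert (E2 : 2*m*t/(phi c m t)^3 - INR (S r) * (/ (phi c m t)^2 - 2*mu) = 0).
{ apply (Rmult_eq_reg_r (/ (t * t^(S r)))). rewrite Rmult_0_l. exact E.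
  apply Rinv_neq_0_compat. lra. }
assert (E3 : (2*m*t/(phi c m t)^3 - INR (S r) * (/ (phi c m t)^2 - 2*mu)) * (phi c m t)^3 = 
   2*m*t - INR (S r) * (phi c m t - 2*mu * (phi c m t)^3)) by (field; lra).
rewrite E2, Rmult_0_l in E3. lra.
Qed.

Lemma psiA p mu c m t r : (p - 2)%nat = S r -> 0 < t ->
  h mu p c m t = 0 -> psi mu c m r t = INR p * INR (p-1) * (1-mu).
Proof.
intros Hq Ht Hh. unfold h, xi2 in Hh. rewrite Hq in Hh. unfold psi.
assert (t^(S r) > 0) by (apply pow_lt; lra).
replace (/ phi c m t ^ 2 - 2 * mu) with (INR p * INR (p-1) * (1-mu) * t^(S r)) by lra.
field. lra.
Qed.

Lemma core p mu m c u v w : (3<=p)%nat -> 0<=mu<1 -> 0<m -> 0<c -> 2*mu*(c+m)^2 <= 1 ->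
  0<u -> u<v -> v<w -> w<1 -> h mu p c m u = 0 -> h mu p c m v = 0 -> h mu p c m w = 0 -> False.
Proof.
intros Hp Hmu Hm Hc Ha Hu Huv Hvw Hw Eu Ev Ew.
assert (Hq : (p-2)%nat = S (p-3)) by lia.
set (r := (p-3)%nat) in *.
pose proof (psiA p mu c m u r Hq ltac:(lra) Eu) as Pu.
pose proof (psiA p mu c m v r Hq ltac:(lra) Ev) as Pv.
pose proof (psiA p mu c m w r Hq ltac:(lra) Ew) as Pw.
assert (Hphi : forall t, t <= 1 -> 0 < phi c m t) by (intros; unfold phi; nra).
destruct (MVT_cor2 (psi mu c m r) (dpsi mu c m r) u v Huv) as [s1 [E1 Hs1]].
{ intros x Hx. apply psi_der. apply Hphi; lra. lra. }
destruct (MVT_cor2 (psi mu c m r) (dpsi mu c m r) v w Hvw) as [s2 [E2 Hs2]].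
{ intros x Hx. apply psi_der. apply Hphi; lra. lra. }
rewrite Pu, Pv in E1. rewrite Pv, Pw in E2.
assert (D1 : dpsi mu c m r s1 = 0).
{ assert (dpsi mu c m r s1 * (v - u) = 0) by lra. apply Rmult_integral in H. lra. }
assert (D2 : dpsi mu c m r s2 = 0).
{ assert (dpsi mu c m r s2 * (w - v) = 0) by lra. apply Rmult_integral in H. lra. }
apply dpsi0 in D1; [| apply Hphi; lra | lra].
apply dpsi0 in D2; [| apply Hphi; lra | lra].
assert (HQ : 1 <= INR (S r)) by (rewrite S_INR; pose proof (pos_INR r); lra).
apply (alg (INR (S r)) (2*mu) (c+m) (phi c m s1) (phi c m s2)); try assumption; try lra.
- apply Hphi; lra.
- unfold phi; nra.
- unfold phi; nra.
- replace (2 * (c + m - phi c m s1)) with (2*m*s1) by (unfold phi; ring). rewrite D1. ring.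
- replace (2 * (c + m - phi c m s2)) with (2*m*s2) by (unfold phi; ring). rewrite D2. ring.
Qed.

Theorem lemma5p7 (p : nat) (mu y m c : R) :
  (3 <= p)%nat ->
  0 <= mu < 1 ->
  1 < y ->
  xi mu p 1 / xi1 mu p 1 = / (y - 1) * (y / (y - 1) * ln y - 1) ->
  0 < m -> 0 < c ->
  xi mu p 1 = / m * (/ m * ln ((c + m) / c) - / (c + m)) ->
  / xi1 mu p 1 = c * (c + m) ->
  xi2 mu p 1 / xi1 mu p 1 <= y ->
  (xi2 mu p 0 <> 0 -> y <= xi1 mu p 1 / xi2 mu p 0) ->
  forall t1 t2 t3 : R,
    0 < t1 < 1 -> 0 < t2 < 1 -> 0 < t3 < 1 ->
    h mu p c m t1 = 0 -> h mu p c m t2 = 0 -> h mu p c m t3 = 0 ->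
    t1 = t2 \/ t1 = t3 \/ t2 = t3.
Proof.
intros Hp Hmu Hy Hyeq Hm Hc H5 H6 Hlo Hhi t1 t2 t3 T1 T2 T3 E1 E2 E3.
assert (Hxi : xi mu p 1 = 1) by (unfold xi; rewrite !pow1; ring).
assert (HX : 0 < xi1 mu p 1).
{ unfold xi1. rewrite pow1. assert (3 <= INR p) by (replace 3 with (INR 3) by (simpl; ring); apply le_INR; exact Hp). nra. }
set (X := xi1 mu p 1) in *.
assert (Hq : (p-2)%nat = S (p-3)) by lia.
assert (Hx20 : xi2 mu p 0 = 2*mu) by (unfold xi2; rewrite Hq; simpl; ring).
set (Y := (c+m)/c).
assert (HY1 : 1 < Y) by (unfold Y; apply Rlt_div_r; lra).
assert (HL : ln Y = m^2 + m/(c+m)).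
{ rewrite Hxi in H5. fold Y in H5.
  assert (E : m*m*(/m*(/m*ln Y - /(c+m))) = ln Y - m/(c+m)) by (field; lra).
  rewrite <- H5 in E. lra. }
assert (GY : G Y = c*(c+m)).
{ unfold G. rewrite HL. unfold Y. field. lra. }
assert (Gy : G y = c*(c+m)).
{ unfold G. rewrite <- Hyeq, Hxi, <- H6. unfold Rdiv; ring. }
assert (HYy : Y <= y).
{ destruct (Rle_lt_dec Y y) as [h1|h1]; [exact h1|].
  pose proof (G_dec y Y Hy h1). lra. }
assert (Ha : 2*mu*(c+m)^2 <= 1).
{ destruct (Req_dec mu 0) as [z|z].
  - rewrite z. lra.
  - assert (y <= X / (2*mu)) by (rewrite <- Hx20; apply Hhi; rewrite Hx20; lra).
    assert (2*mu*y <= X).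
    { apply (Rmult_le_compat_l (2*mu)) in H; [|lra].
      replace (2*mu*(X/(2*mu))) with X in H by (field; lra). exact H. }
    assert (HX' : X * (c*(c+m)) = 1) by (rewrite <- H6; field; lra).
    assert (2*mu*(c+m)^2 = 2*mu*Y*(c*(c+m))) by (unfold Y; field; lra).
    assert (2*mu*Y*(c*(c+m)) <= 2*mu*y*(c*(c+m))).
    { apply Rmult_le_compat_r. nra. apply Rmult_le_compat_l; lra. }
    assert (2*mu*y*(c*(c+m)) <= X*(c*(c+m))) by (apply Rmult_le_compat_r; nra).
    lra. }
destruct (Rtotal_order t1 t2) as [a|[a|a]]; [| left; exact a |];
destruct (Rtotal_order t1 t3) as [b|[b|b]]; try (right; left; exact b);
destruct (Rtotal_order t2 t3) as [d|[d|d]]; try (right; right; exact d);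
exfalso;
first
[ apply (core p mu m c t1 t2 t3); auto; lra
| apply (core p mu m c t1 t3 t2); auto; lra
| apply (core p mu m c t2 t1 t3); auto; lra
| apply (core p mu m c t2 t3 t1); auto; lra
| apply (core p mu m c t3 t1 t2); auto; lra
| apply (core p mu m c t3 t2 t1); auto; lra
| lra ].
Qed.
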